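(* Let $G$ be a finite group with $G=\langle x,y\rangle$, where $x$ has order $3$ and $y$ has order at least $4$. Then $\mathrm{Cay}(G,\{x,y\})$ is an oriented regular representation (ORR) of $G$, unless $y$ has order $6$, $x=y^4$, and $G\cong\mathbb{Z}_6$.
   Context: For a group $G$ and $S\subseteq G$, the Cayley digraph $\mathrm{Cay}(G,S)$ has vertex set $G$, and $(u,v)$ is an arc whenever $vu^{-1}\in S$. Its automorphism group consists of the permutations of $G$ preserving the arc set, and always contains the right regular representation of $G$. $\mathrm{Cay}(G,S)$ is an oriented regular representation (ORR) if its automorphism group equals the right regular representation of $G$ and it is a proper digraph, i.e. $(u,v)$ being an arc implies $(v,u)$ is not an arc (equivalently $S\cap S^{-1}=\emptyset$). *)

(* Defs.v *)
From mathcomp Require Import all_boot all_fingroup all_algebra.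
Set Implicit Arguments. Unset Strict Implicit. Unset Printing Implicit Defensive.
Local Open Scope group_scope.

Definition cay_arc (gT : finGroupType) (S : {set gT}) (u v : gT) : bool :=
  v * u^-1 \in S.

Definition cay_aut (gT : finGroupType) (S : {set gT}) (f : {perm gT}) : Prop :=
  forall u v : gT, cay_arc S (f u) (f v) = cay_arc S u v.

Definition right_regular (gT : finGroupType) (f : {perm gT}) : Prop :=
  exists g : gT, forall u : gT, f u = u * g.

Definition proper_digraph (gT : finGroupType) (S : {set gT}) : Prop :=
  forall u v : gT, cay_arc S u v -> ~~ cay_arc S v u.

Definition is_ORR (gT : finGroupType) (S : {set gT}) : Prop :=
  proper_digraph S /\ (forall f : {perm gT}, cay_aut S f <-> right_regular f).

(* Main.v *)
Require Import Defs.
From mathcomp Require Import all_boot all_fingroup all_algebra.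
From mathcomp Require Import all_solvable.
Local Open Scope group_scope.

Section Aux.
Variables (gT : finGroupType) (x y : gT).
Let S := [set x; y].

Definition paut (h : gT -> gT) :=
  forall u v, cay_arc S (h u) (h v) = cay_arc S u v.

Lemma arc_rmul g u v : cay_arc S (u * g) (v * g) = cay_arc S u v.
Proof. by rewrite /cay_arc invMg mulgA mulgK. Qed.

Hypothesis ox : #[x] = 3%N.
Hypothesis oy : (4 <= #[y])%N.
Hypothesis nxyy : x * y * y != 1.

Lemma x3 : x ^+ 3 = 1. Proof. by rewrite -ox expg_order. Qed.

Lemma key h : injective h -> paut h -> h 1 = 1 -> h x = x /\ h y = y.
Proof.
move=> hi ha h1.
have nb u : (u \in S) = (h u \in S).
  by have := ha 1 u; rewrite /cay_arc h1 !invg1 !mulg1 => ->.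
have xy : x != y.
  by apply/eqP => exy; move: oy; rewrite -exy ox.
have hx : h x \in S by rewrite -nb !inE eqxx.
have hy : h y \in S by rewrite -nb !inE eqxx orbT.
have hxy : h x != h y by apply: contra xy => /eqP /hi ->.
move: hx hy hxy; rewrite !inE.
case/orP=> /eqP hx; case/orP=> /eqP hy; rewrite hx hy ?eqxx //.
move=> _.
(* h x = y, h y = x : contradiction *)
exfalso.
have a1 := ha x (x * x).
have a2 := ha (x * x) 1.
rewrite /cay_arc mulgK hx !inE eqxx /= in a1.
rewrite /cay_arc h1 !mul1g in a2.
have e : (x * x)^-1 = x.
  apply/eqP; rewrite eq_invg_mul; apply/eqP.
  by rewrite -x3 !expgS expg0 mulg1 mulgA.
rewrite e !inE eqxx /= in a2.
set w := h (x * x) in a1 a2; clearbody w.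
have ey3 : ~ (y ^+ 3 = 1).
  move=> E; have : (#[y] %| 3)%N by rewrite order_dvdn E.
  by move/dvdn_leq => /(_ isT); move: oy; case: #[y] => [|[|[|[|]]]].
have xi : x^-1 = x ^+ 2 by apply/eqP; rewrite eq_invg_mul -expgS x3.
have [E|E] : w = x * y \/ w = y * y.
  by move/orP: a1 => [] /eqP a1; [left|right]; apply: (mulIg y^-1); rewrite a1 mulgK.
- rewrite E in a2; move/orP: a2 => [] /eqP a2.
  + have E2 : x * y = x^-1 by rewrite -[LHS]invgK a2.
    have Ey : y = x.
      have -> : y = x^-1 * x^-1 by rewrite -{2}E2 mulKg.
      by rewrite xi -expgD -[(2+2)%N]/(3 + 1)%N expgD x3 mul1g expg1.
    by move: oy; rewrite Ey ox.
  + by move: nxyy; rewrite -eq_invg_mul a2 eqxx.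
- rewrite E in a2; move/orP: a2 => [] /eqP a2.
  + by move: nxyy; rewrite -mulgA -a2 mulVg eqxx.
  + apply: ey3; apply/eqP; rewrite expgS expgS expg1 mulgA -eq_invg_mul a2 //.
Qed.

Hypothesis gen : <<[set x; y]>> = [set: gT].

Lemma fix_all h : injective h -> paut h -> h 1 = 1 -> forall u, h u = u.
Proof.
move=> hi ha h1.
pose H := [set u | h u == u].
have step u : u \in H -> (x * u \in H) && (y * u \in H).
  rewrite !inE => /eqP hu.
  pose h' v := h (v * u) * u^-1.
  have hi' : injective h' by move=> a b /mulIg /hi /mulIg.
  have ha' : paut h' by move=> a b; rewrite /h' !arc_rmul ha arc_rmul.
  have h1' : h' 1 = 1 by rewrite /h' mul1g hu mulgV.
  have [k1 k2] := @key h' hi' ha' h1'.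
  rewrite /h' in k1 k2.
  move/(canRL (mulgKV u)): k1 => ->; move/(canRL (mulgKV u)): k2 => ->.
  by rewrite !eqxx.
pose K := [set g | [forall u in H, g * u \in H]].
have gK : group_set K.
  apply/andP; split.
    by rewrite inE; apply/forall_inP => u; rewrite mul1g.
  apply/subsetP => g /mulsgP [a b aK bK ->]; rewrite inE.
  apply/forall_inP => u uH; rewrite -mulgA.
  move: aK bK; rewrite !inE => /forall_inP aK /forall_inP bK.
  by have := aK _ (bK _ uH); rewrite inE.
have sub : [set x; y] \subset Group gK.
  apply/subsetP => g; rewrite !inE => /orP[]/eqP ->; rewrite ?inE;
    by apply/forall_inP => u /step /andP[].
move: sub; rewrite -gen_subG gen => /subsetP sK u.
have H1 : 1 \in H by rewrite inE h1.
have := sK u (in_setT u); rewrite /= inE => /forall_inP /(_ 1 H1).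
by rewrite mulg1 inE => /eqP.
Qed.
End Aux.

Theorem lemma2p4 (gT : finGroupType) (x y : gT) :
  <<[set x; y]>> = [set: gT] ->
  #[x] = 3%N -> (4 <= #[y])%N ->
  is_ORR [set x; y] \/
  (#[y] = 6%N /\ x = y ^+ 4 /\ [set: gT] \isog [set: 'Z_6]).
Proof.
move=> gen ox oy.
have n2 (a : gT) : (2 < #[a])%N -> a^-1 != a.
  move=> oa; apply/negP => /eqP E.
  have : (#[a] %| 2)%N by rewrite order_dvdn expgS expg1 -{1}E mulVg.
  by move/dvdn_leq => /(_ isT); rewrite leqNgt oa.
have nxy : x^-1 != y.
  by apply/negP => /eqP E; move: oy; rewrite -E orderV ox.
have nyx : y^-1 != x.
  by apply/negP => /eqP E; move: oy; rewrite -(invgK y) E orderV ox.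
case: (boolP (x * y * y == 1)) => [E|nxyy].
  right.
  have xi : x^-1 = y ^+ 2 by apply/eqP; rewrite eq_invg_mul expgS expg1 mulgA.
  have y6 : y ^+ 6 = 1.
    by rewrite -[6%N]/(2 * 3)%N expgM -xi expgVn -ox expg_order invg1.
  have o6 : #[y] = 6%N.
    have : (#[y] %| 6)%N by rewrite order_dvdn y6.
    move=> d; have := dvdn_leq (isT : (0 < 6)%N) d; move: d oy.
    by case: #[y] => [|[|[|[|[|[|[|]]]]]]].
  have x4 : x = y ^+ 4.
    rewrite -[x]invgK xi; apply/eqP; rewrite eq_invg_mul -expgD; exact/eqP.
  split=> //; split=> //.
  have Gy : [set: gT] = <[y]>.
    apply/eqP; rewrite eqEsubset subsetT /= -gen gen_subG andbT.
    apply/subsetP => g; rewrite !inE => /orP[]/eqP ->.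
      by rewrite x4 mem_cycle.
    exact: cycle_id.
  have cyc : cyclic [set: gT] by rewrite Gy cycle_cyclic.
  rewrite (isog_cyclic_card [set: 'Z_6]%G cyc).
  apply/andP; split.
    by rewrite /= Zp_cycle cycle_cyclic.
  by rewrite /= cardsT card_ord Gy -orderE o6.
left; split.
  move=> u v; rewrite /cay_arc.
  have -> : u * v^-1 = (v * u^-1)^-1 by rewrite invMg invgK.
  move: (v * u^-1) => a; rewrite !inE => /orP[]/eqP ->.
    by rewrite negb_or n2 ?ox.
  by rewrite negb_or nyx n2 //; apply: leq_trans oy.
move=> f; split.
  move=> fa.
  pose g := f 1.
  pose h u := f u * g^-1.
  have hi : injective h by move=> a b /mulIg /perm_inj.
  have ha : @paut gT x y h by move=> a b; rewrite /h arc_rmul fa.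
  have h1 : h 1 = 1 by rewrite /h mulgV.
  have hf := @fix_all gT x y ox oy nxyy gen h hi ha h1.
  exists g => u; have := hf u; rewrite /h => /(canRL (mulgKV g)).
  done.
by move=> [g Hg] u v; rewrite !Hg arc_rmul.
Qed.
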